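(* Let $0<a<1$ be a constant and let $k_1\ge k_2\ge\cdots\ge k_n$ and $\ell_1\ge\ell_2\ge\cdots\ge\ell_n$ be non-negative integers such that $\sum_{i=1}^j k_i\le\sum_{i=1}^j\ell_i$ for every $j\le n$ and $\sum_{i=1}^n k_i=\sum_{i=1}^n\ell_i$. Let $X=\sum_{i=1}^n X_i$ and $Y=\sum_{i=1}^n Y_i$, where $X_1,\dots,X_n$ are independent indicator random variables with $\Pr[X_i=1]=a^{k_i}$ and $Y_1,\dots,Y_n$ are independent indicator random variables with $\Pr[Y_i=1]=a^{\ell_i}$. Then for every integer $M$, $\Pr[X\ge M]\le\Pr[Y\ge M]$. *)

(* Defs.v *)
From HB Require Import structures.
From mathcomp Require Import all_boot all_order all_algebra.
Set Implicit Arguments. Unset Strict Implicit. Unset Printing Implicit Defensive.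
Import Order.TTheory GRing.Theory Num.Theory.
Local Open Scope ring_scope.

(* For independent indicator variables Z_0,...,Z_{n-1} with Pr[Z_i = 1] = p i,
   the probability Pr[Z_0 + ... + Z_{n-1} >= M], computed on the product
   probability space {0,1}^n: an outcome is the set S of indices i with Z_i = 1,
   of probability prod_{i in S} p i * prod_{i notin S} (1 - p i). *)
Definition indep_indicator_sum_ge (R : numDomainType) (n : nat)
    (p : nat -> R) (M : int) : R :=
  \sum_(S : {set 'I_n} | M <= (#|S| : int))
     \prod_(i < n) (if i \in S then p i else 1 - p i).

(* Main.v *)
Require Import Defs.
From HB Require Import structures.
From mathcomp Require Import all_boot all_order all_algebra.
From mathcomp Require Import perm.
From mathcomp Require Import ring lra.
Import Order.TTheory GRing.Theory Num.Theory.
Local Open Scope ring_scope.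

Section Decomp.
Variables (R : realFieldType) (n : nat) (M : int) (i j : 'I_n).
Hypothesis hij : i != j.

Definition wt (p : nat -> R) (S : {set 'I_n}) (t : 'I_n) : R :=
  if t \in S then p t else 1 - p t.
Definition Qp (p : nat -> R) S := \prod_(t | (t != i) && (t != j)) wt p S t.

Definition togi (S : {set 'I_n}) := if i \in S then S :\ i else i |: S.

Lemma togiK : involutive togi.
Proof.
move=> S; rewrite /togi; case iS: (i \in S).
  by rewrite !inE eqxx /= setD1K.
by rewrite setU11 setU1K // iS.
Qed.

Lemma Qp_togi p S : Qp p (togi S) = Qp p S.
Proof.
apply: eq_bigr => t /andP[ti tj]; rewrite /wt /togi.
by case: (i \in S); rewrite !inE (negbTE ti).
Qed.

Lemma Qp_sw p (S : {set 'I_n}) : Qp p (tperm i j @^-1: S) = Qp p S.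
Proof.
apply: eq_bigr => t /andP[ti tj]; rewrite /wt inE tpermD // eq_sym //.
Qed.

Lemma Qp_ext (p p' : nat -> R) (S : {set 'I_n}) : (forall t : 'I_n, t != i -> t != j -> p t = p' t) ->
  Qp p S = Qp p' S.
Proof.
move=> h; apply: eq_bigr => t /andP[ti tj]; rewrite /wt !h //.
Qed.

Lemma Qp_ge0 (p : nat -> R) (S : {set 'I_n}) : (forall t : 'I_n, 0 <= p t <= 1) -> 0 <= Qp p S.
Proof.
move=> h; apply: prodr_ge0 => t _; rewrite /wt; case: ifP => _;
  have /andP[h0 h1] := h t; rewrite ?subr_ge0 //.
Qed.

Definition C11 (p : nat -> R) := \sum_(S : {set 'I_n} | ((M <= (#|S| : int)) && (i \in S)) && (j \in S)) Qp p S.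
Definition C10 (p : nat -> R) := \sum_(S : {set 'I_n} | ((M <= (#|S| : int)) && (i \in S)) && ~~ (j \in S)) Qp p S.
Definition C01 (p : nat -> R) := \sum_(S : {set 'I_n} | ((M <= (#|S| : int)) && ~~ (i \in S)) && (j \in S)) Qp p S.
Definition C00 (p : nat -> R) := \sum_(S : {set 'I_n} | ((M <= (#|S| : int)) && ~~ (i \in S)) && ~~ (j \in S)) Qp p S.

Lemma decomp (p : nat -> R) : indep_indicator_sum_ge n p M =
  p i * p j * C11 p + p i * (1 - p j) * C10 p + (1 - p i) * p j * C01 p
  + (1 - p i) * (1 - p j) * C00 p.
Proof.
rewrite /indep_indicator_sum_ge.
have E : forall S : {set 'I_n}, \prod_(t < n) (if t \in S then p t else 1 - p t)
   = wt p S i * wt p S j * Qp p S.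
  move=> S; rewrite (bigD1 i) //= (bigD1 j) //=; last by rewrite eq_sym.
  by rewrite mulrA /Qp.
rewrite (eq_bigr _ (fun S _ => E S)).
rewrite (bigID (fun S : {set 'I_n} => i \in S)) /= (bigID (fun S : {set 'I_n} => j \in S)) /=.
rewrite [X in _ + X](bigID (fun S : {set 'I_n} => j \in S)) /=.
rewrite /C11 /C10 /C01 /C00 !big_distrr /=.
rewrite -!addrA; congr (_ + _); [|congr (_ + _); [|congr (_ + _)]];
  apply: eq_bigr => S /andP[/andP[_ hi] hj]; rewrite /wt;
  rewrite ?(negbTE hi) ?(negbTE hj) ?hi ?hj //.
Qed.

Lemma C10_C01 (p : nat -> R) : C10 p = C01 p.
Proof.
rewrite /C01 (reindex_inj (h := fun S : {set 'I_n} => tperm i j @^-1: S)); last first.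
  by move=> A B /setP h; apply/setP => x; have := h (tperm i j x); rewrite !inE tpermK.
apply: eq_big => S.
  rewrite !inE tpermL tpermR card_preimset //; last exact: perm_inj.
  by case: (M <= _); case: (i \in S); case: (j \in S).
by move=> _; rewrite Qp_sw.
Qed.

Lemma C00_le_C10 (p : nat -> R) : (forall t : 'I_n, 0 <= p t <= 1) -> C00 p <= C10 p.
Proof.
move=> hp; rewrite /C10 (reindex_inj (h := togi)); last exact: inv_inj togiK.
rewrite /C00 [X in _ <= X]big_mkcond [X in X <= _]big_mkcond /=.
apply: ler_sum => S _.
case: ifP => [/andP[/andP[hM hi] hj]|_]; last by case: ifP => // _; exact: Qp_ge0.
rewrite Qp_togi /togi (negbTE hi) !inE eqxx /= (negbTE hj).
rewrite eq_sym (negbTE hij) /= cardsU1 hi.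
by rewrite (le_trans hM) // lez_nat leqnSn.
Qed.


Lemma transfer (p p' : nat -> R) :
  (forall t : 'I_n, t != i -> t != j -> p t = p' t) ->
  (forall t : 'I_n, 0 <= p t <= 1) ->
  p i * p j = p' i * p' j -> p' i + p' j <= p i + p j ->
  indep_indicator_sum_ge n p' M <= indep_indicator_sum_ge n p M.
Proof.
move=> hext hp hprod hsum.
have E : forall S, Qp p' S = Qp p S by move=> S; apply/esym/Qp_ext.
have E11 : C11 p' = C11 p by apply: eq_bigr => S _; rewrite E.
have E10 : C10 p' = C10 p by apply: eq_bigr => S _; rewrite E.
have E00 : C00 p' = C00 p by apply: eq_bigr => S _; rewrite E.
rewrite !decomp -!C10_C01 E11 E10 E00.
have H := C00_le_C10 p hp.
set c11 := C11 p; set c := C10 p; set c0 := C00 p.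
rewrite -subr_ge0.
have -> : p i * p j * c11 + p i * (1 - p j) * c + (1 - p i) * p j * c +
  (1 - p i) * (1 - p j) * c0 -
  (p' i * p' j * c11 + p' i * (1 - p' j) * c + (1 - p' i) * p' j * c +
   (1 - p' i) * (1 - p' j) * c0) = (p i + p j - (p' i + p' j)) * (c - c0).
  set x := p i; set y := p j; set x' := p' i; set y' := p' j.
  have F : forall u v w : R, u = v + (x * y - x' * y') * w -> u = v.
    by move=> u v w ->; rewrite hprod subrr mul0r addr0.
  apply: (F _ _ (c11 - 2 * c + c0)); ring.
by apply: mulr_ge0; rewrite subr_ge0.
Qed.

End Decomp.
From mathcomp Require Import zify.

Lemma sum_ind_eq (w : nat -> nat) (i m : nat) :
  (\sum_(t < m) (nat_of_ord t == i) * w t = (i < m) * w i)%N.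
Proof.
elim: m => [|m IH]; first by rewrite big_ord0.
rewrite big_ord_recr /= IH.
change (nat_of_ord (@ord_max m)) with m.
case: (ltngtP i m) => [h|h|->];
  [have -> : (i < m.+1)%N = true by lia | have -> : (i < m.+1)%N = false by lia
  | rewrite ltnSn]; by rewrite ?mul1n ?mul0n ?addn0.
Qed.

Lemma shift_sum (f g w : nat -> nat) (i j m : nat) :
  (forall t, f t + (t == i) = g t + (t == j))%N ->
  (\sum_(t < m) f t * w t + (i < m) * w i =
   \sum_(t < m) g t * w t + (j < m) * w j)%N.
Proof.
move=> h; rewrite -!sum_ind_eq -!big_split /=.
by apply: eq_bigr => t _; rewrite -!mulnDl h.
Qed.

Lemma shift_sum1 (f g : nat -> nat) (i j m : nat) :
  (forall t, f t + (t == i) = g t + (t == j))%N ->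
  (\sum_(t < m) f t + (i < m) = \sum_(t < m) g t + (j < m))%N.
Proof.
move=> h; have := shift_sum _ _ (fun _ => 1%N) _ _ m h.
have E : forall F : nat -> nat, (\sum_(t < m) F t * 1 = \sum_(t < m) F t)%N.
  by move=> F; apply: eq_bigr => t _; rewrite muln1.
by rewrite !E !muln1.
Qed.

Definition upd (e : nat -> nat) (i j : nat) (t : nat) : nat :=
  if t == i then (e i).-1 else if t == j then (e j).+1 else e t.

Lemma upd_shift e i j : i != j -> (0 < e i)%N ->
  forall t, (upd e i j t + (t == i) = e t + (t == j))%N.
Proof.
move=> hij hi t; rewrite /upd; case: (eqVneq t i) => [->|ti].
  by rewrite (negbTE hij) addn0 addn1 prednK.
by case: (eqVneq t j) => [->|tj]; rewrite ?addn0 ?addn1.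
Qed.

Lemma sumS (f : nat -> nat) m :
  (\sum_(t < m.+1) f t = \sum_(t < m) f t + f m)%N.
Proof. by rewrite big_ord_recr. Qed.

Section Main.
Variables (R : realFieldType) (a : R) (n : nat) (M : int).
Hypotheses (ha0 : 0 < a) (ha1 : a < 1).

Definition Pe (e : nat -> nat) := indep_indicator_sum_ge n (fun t => a ^+ e t) M.

Lemma Pe_transfer (e : nat -> nat) (i j : nat) (hi : (i < n)%N) (hj : (j < n)%N) :
  i != j -> (e j < e i)%N -> Pe (upd e i j) <= Pe e.
Proof.
move=> hij hlt.
have hij' : Ordinal hi != Ordinal hj by [].
have hji : (j == i) = false by rewrite eq_sym (negbTE hij).
apply: (@transfer R n M _ _ hij').
- move=> t ti tj; rewrite /upd.
  have ->: (nat_of_ord t == i) = false by apply/negbTE.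
  by have ->: (nat_of_ord t == j) = false by apply/negbTE.
- move=> t; apply/andP; split; [exact: exprn_ge0 (ltW ha0) | exact: exprn_ile1 (ltW ha0) (ltW ha1)].
- rewrite /upd /= !eqxx hji /= -!exprD.
  congr (_ ^+ _); lia.
- rewrite /upd /= !eqxx hji /=.
  have -> : e i = ((e i).-1).+1 by lia.
  rewrite succnK !exprS.
  have : a ^+ (e i).-1 <= a ^+ e j.
    by apply: ler_wiXn2l; rewrite ?ltW //; lia.
  set A := a ^+ (e i).-1; set B := a ^+ e j.
  move=> hAB.
  have hA : 0 <= A by rewrite exprn_ge0 ?ltW.
  have h1 : 0 <= (1 - a) * (B - A) by apply: mulr_ge0; rewrite subr_ge0 // ltW.
  nra.
Qed.

Lemma Pe_ext (e e' : nat -> nat) : (forall t, (t < n)%N -> e t = e' t) ->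
  Pe e = Pe e'.
Proof.
move=> h; apply: eq_bigr => S _; apply: eq_bigr => t _; rewrite h //.
Qed.

Lemma main_gen (k : nat -> nat)
  (hk : forall i j : nat, (i <= j)%N -> (j < n)%N -> (k j <= k i)%N) N :
  forall l : nat -> nat, (\sum_(t < n) l t * (n - t) < N)%N ->
  (forall m : nat, (m <= n)%N -> (\sum_(t < m) k t <= \sum_(t < m) l t)%N) ->
  (\sum_(t < n) k t)%N = (\sum_(t < n) l t)%N -> Pe k <= Pe l.
Proof.
elim: N => [|N IH] l hN hmaj hsum; first by [].
case: (boolP [forall t : 'I_n, l t == k t]) => [/forallP heq | hne].
  by rewrite (@Pe_ext k l) // => t ht; apply/esym/eqP/(heq (Ordinal ht)).
have exi : exists t, (t < n)%N && (l t != k t).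
  by move/forallPn: hne => [t ht]; exists (nat_of_ord t); rewrite ltn_ord ht.
case: (ex_minnP exi) => i /andP[hin hik] hmin.
have hpre : forall t, (t < i)%N -> l t = k t.
  move=> t ti; have tn : (t < n)%N by lia.
  apply/eqP; apply: contraTT ti => h; rewrite -leqNgt; apply: hmin.
  by rewrite h tn.
have hLi : (\sum_(t < i) l t)%N = (\sum_(t < i) k t)%N.
  by apply: eq_bigr => t _; apply: hpre.
have hki : (k i < l i)%N.
  by have := hmaj i.+1 hin; rewrite !sumS hLi; lia.
have exm : exists m, [&& (i < m)%N, (m <= n)%N &
   (\sum_(t < m) l t)%N == (\sum_(t < m) k t)%N].
  by exists n; rewrite hin leqnn hsum eqxx.
case: (ex_minnP exm) => m /and3P[him hmn /eqP hLm] hminm.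
have hm2 : (i.+1 < m)%N.
  case: (eqVneq m i.+1) => [em|ne]; last by lia.
  by exfalso; move: hLm; rewrite em !sumS hLi; lia.
have [j hjm] : exists j, m = j.+1 by exists m.-1; lia.
subst m.
have hjn : (j < n)%N by lia.
have hij : (i < j)%N by lia.
have hgt : forall m', (i < m')%N -> (m' <= j)%N ->
    (\sum_(t < m') k t < \sum_(t < m') l t)%N.
  move=> m' h1 h2; have h3 : (m' <= n)%N by lia.
  have := hmaj m' h3.
  case: (eqVneq (\sum_(t < m') l t)%N (\sum_(t < m') k t)%N) => [e|ne]; last by lia.
  by have := hminm m'; rewrite h1 h3 e eqxx /= => /(_ isT); lia.
have hlj : (l j < k j)%N.
  by have := hgt j hij (leqnn j); move: hLm; rewrite !sumS; lia.
have hkji := hk i j (ltnW hij) hjn.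
have hlij : (l j < l i)%N by lia.
have hij' : i != j by lia.
have hpos : (0 < l i)%N by lia.
have hl' := @Pe_transfer l i j hin hjn hij' hlij.
apply: le_trans (IH (upd l i j) _ _ _) hl'.
- have := shift_sum _ _ (fun t => n - t)%N _ _ n (upd_shift l i j hij' hpos).
  rewrite hin hjn /= !mul1n => h.
  have h2 : (\sum_(t < n) upd l i j t * (n - t) + (n - i) = \sum_(t < n) l t * (n - t) + (n - j))%N by exact: h.
  set S := (\sum_(t < n) l t * (n - t))%N in h2 hN.
  set S' := (\sum_(t < n) upd l i j t * (n - t))%N in h2 *. lia.
- move=> m' hm'; have := shift_sum1 _ _ _ _ m' (upd_shift l i j hij' hpos) => h.
  have H1 := hmaj m' hm'.
  have H3 : (i < m')%N -> (m' <= j)%N -> (\sum_(t < m') k t < \sum_(t < m') l t)%N.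
    exact: hgt.
  set S := (\sum_(t < m') l t)%N in h H1 H3.
  set S' := (\sum_(t < m') upd l i j t)%N in h *.
  set K := (\sum_(t < m') k t)%N in H1 H3 *.
  case: (leqP m' i) => h1.
    have e1 : (i < m')%N = false by lia.
    have e2 : (j < m')%N = false by lia.
    rewrite e1 e2 in h; lia.
  case: (leqP m' j) => h2.
    have := H3 h1 h2.
    have e1 : (i < m')%N = true by lia.
    have e2 : (j < m')%N = false by lia.
    rewrite e1 e2 in h; lia.
  have e1 : (i < m')%N = true by lia.
  have e2 : (j < m')%N = true by lia.
  rewrite e1 e2 in h; lia.
- have := shift_sum1 _ _ _ _ n (upd_shift l i j hij' hpos).
  rewrite hin hjn /= => h.
  set S := (\sum_(t < n) l t)%N in h hsum.
  set S' := (\sum_(t < n) upd l i j t)%N in h *.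
  set K := (\sum_(t < n) k t)%N in hsum *. lia.
Qed.

End Main.

Theorem mainTheorem4 (R : realFieldType) (a : R) (n : nat) (k l : nat -> nat)
    (ha0 : 0 < a) (ha1 : a < 1)
    (hk : forall i j : nat, (i <= j)%N -> (j < n)%N -> (k j <= k i)%N)
    (hl : forall i j : nat, (i <= j)%N -> (j < n)%N -> (l j <= l i)%N)
    (hmaj : forall j : nat, (j <= n)%N ->
       (\sum_(i < j) k i <= \sum_(i < j) l i)%N)
    (hsum : (\sum_(i < n) k i)%N = (\sum_(i < n) l i)%N)
    (M : int) :
  indep_indicator_sum_ge n (fun i => a ^+ k i) M
  <= indep_indicator_sum_ge n (fun i => a ^+ l i) M.
Proof.
exact: (@main_gen R a n M ha0 ha1 k hk (\sum_(t < n) l t * (n - t)).+1 l (ltnSn _) hmaj hsum).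
Qed.
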